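(* For any qubit state $\rho$ (density matrix on $\mathbb{C}^2$), $$F_c(\rho)=\frac{1}{2}+\frac{1}{2}\,C_{\mathcal{R}}(\rho).$$
   Context: Coherence is taken with respect to the computational basis $\{|0\rangle,|1\rangle\}$; incoherent states are those diagonal in this basis, forming the set $\mathcal{I}$. The set of maximally coherent qubit states is $\mathcal{M}=\{\frac{1}{\sqrt2}(e^{\mathfrak{i}\theta_0}|0\rangle+e^{\mathfrak{i}\theta_1}|1\rangle):\theta_0,\theta_1\in[0,2\pi]\}$, and the coherence fraction is $F_c(\rho)=\max_{|\phi\rangle\in\mathcal{M}}\langle\phi|\rho|\phi\rangle$. The robustness of coherence is $C_{\mathcal{R}}(\rho)=\min_{\tau}\{s\ge 0: \frac{\rho+s\tau}{1+s}\in\mathcal{I}\}$, where the minimum is over all states $\tau$. *)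

(* Defs.v *)
From HB Require Import structures.
From mathcomp Require Import all_boot all_order all_algebra.
From mathcomp Require Import all_classical all_reals.
From mathcomp Require Import trigo.
From mathcomp Require Import complex.

Set Implicit Arguments.
Unset Strict Implicit.
Unset Printing Implicit Defensive.

Import Order.TTheory GRing.Theory Num.Theory.
Local Open Scope ring_scope.
Local Open Scope complex_scope.
Local Open Scope classical_set_scope.

Section Qubit.
Variable R : realType.
Local Notation C := R[i].

Definition adjmx m n (A : 'M[C]_(m, n)) : 'M[C]_(n, m) := map_mx conjc A^T.

(* Density matrix (qubit state): Hermitian, positive semidefinite, trace 1.
   The order on R[i] is the numeric-field order: 0 <= z iff z is real
   and nonnegative. *)
Definition is_state (rho : 'M[C]_2) : Prop :=
  adjmx rho = rho /\
  (forall v : 'cV[C]_2, 0 <= (adjmx v *m rho *m v) 0 0) /\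
  \tr rho = 1.

Definition incoherent (rho : 'M[C]_2) : Prop :=
  is_state rho /\ is_diag_mx rho.

Definition expi (t : R) : C := (cos t) +i* (sin t).

Definition maxcoh (t0 t1 : R) : 'cV[C]_2 :=
  \matrix_(k, j) (((Num.sqrt 2)^-1)%:C * (if val k == 0%N then expi t0 else expi t1)).

Definition braket (rho : 'M[C]_2) (phi : 'cV[C]_2) : C :=
  (adjmx phi *m rho *m phi) 0 0.

(* Coherence fraction: max over M of <phi|rho|phi> (a real number for
   Hermitian rho; we take its real part). *)
Definition coh_fraction (rho : 'M[C]_2) : R :=
  sup [set r : R | exists t0 t1 : R,
        [/\ (0 <= t0 <= 2 * pi)%R, (0 <= t1 <= 2 * pi)%R &
            r = complex.Re (braket rho (maxcoh t0 t1))]].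

Definition robustness (rho : 'M[C]_2) : R :=
  inf [set s : R | (0 <= s)%R /\ exists tau : 'M[C]_2,
        is_state tau /\ incoherent ((1 + s%:C)^-1 *: (rho + s%:C *: tau))].

End Qubit.

(* Main.v *)
Require Import Defs.
From HB Require Import structures.
From mathcomp Require Import all_boot all_order all_algebra.
From mathcomp Require Import all_classical all_reals.
From mathcomp Require Import trigo.
From mathcomp Require Import complex.
From mathcomp Require Import ring lra.
Import Order.TTheory GRing.Theory Num.Theory.
Local Open Scope ring_scope.
Local Open Scope complex_scope.
Set Implicit Arguments.
Unset Strict Implicit.

Section Tool.
Variable R : realType.
Implicit Types x y : R[i].
Local Notation Re := (@complex.Re R).
Local Notation Im := (@complex.Im R).

Lemma sum2 (V : nmodType) (F : 'I_2 -> V) : \sum_(i < 2) F i = F 0 + F 1.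
Proof.
rewrite big_ord_recl big_ord1; congr (_ + F _); exact: val_inj.
Qed.

Lemma ReM x y : Re (x * y) = Re x * Re y - Im x * Im y. Proof. by case: x => a b; case: y => c d. Qed.
Lemma ImM x y : Im (x * y) = Re x * Im y + Im x * Re y. Proof. by case: x => a b; case: y => c d. Qed.
Lemma ReD x y : Re (x + y) = Re x + Re y. Proof. by case: x => a b; case: y => c d. Qed.
Lemma ImD x y : Im (x + y) = Im x + Im y. Proof. by case: x => a b; case: y => c d. Qed.
Lemma ReN x : Re (- x) = - Re x. Proof. by case: x. Qed.
Lemma ImN x : Im (- x) = - Im x. Proof. by case: x. Qed.
Lemma ReJ x : Re (x^*) = Re x. Proof. by case: x. Qed.
Lemma ImJ x : Im (x^*) = - Im x. Proof. by case: x. Qed.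
Lemma ReC (k : R) : Re (k%:C) = k. Proof. by []. Qed.
Lemma ImC (k : R) : Im (k%:C) = 0. Proof. by []. Qed.
Lemma Re0 : Re (0 : R[i]) = 0. Proof. by []. Qed.
Lemma Im0 : Im (0 : R[i]) = 0. Proof. by []. Qed.
Lemma Re1 : Re (1 : R[i]) = 1. Proof. by []. Qed.
Lemma Im1 : Im (1 : R[i]) = 0. Proof. by []. Qed.
Lemma ReX (a b : R) : Re (a +i* b) = a. Proof. by []. Qed.
Lemma ImX (a b : R) : Im (a +i* b) = b. Proof. by []. Qed.

Lemma ceqP x y : Re x = Re y -> Im x = Im y -> x = y.
Proof. by case: x => a b; case: y => c d /= -> ->. Qed.
Lemma cge0 x : (0 <= x) = (Im x == 0) && (0 <= Re x).
Proof. by rewrite lecE /= eq_sym. Qed.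

Definition ReIm := (ReM, ImM, ReD, ImD, ReN, ImN, ReJ, ImJ, ReC, ImC, Re0, Im0, Re1, Im1, ReX, ImX).

Lemma quad (rho : 'M[R[i]]_2) (v : 'cV[R[i]]_2) :
  (adjmx v *m rho *m v) 0 0 =
  ((v 0 0)^* * rho 0 0 + (v 1 0)^* * rho 1 0) * v 0 0 +
  ((v 0 0)^* * rho 0 1 + (v 1 0)^* * rho 1 1) * v 1 0.
Proof. by rewrite /adjmx !mxE !sum2 !mxE !sum2 !mxE. Qed.


Definition vec (x y : R[i]) : 'cV[R[i]]_2 := \matrix_(i, j) (if val i == 0%N then x else y).

Lemma quadv (rho : 'M[R[i]]_2) x y :
  (adjmx (vec x y) *m rho *m (vec x y)) 0 0 =
  (x^* * rho 0 0 + y^* * rho 1 0) * x + (x^* * rho 0 1 + y^* * rho 1 1) * y.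
Proof. by rewrite quad !mxE. Qed.

Lemma state_facts (rho : 'M[R[i]]_2) : is_state rho ->
  [/\ Im (rho 0 0) = 0, Im (rho 1 1) = 0, rho 1 0 = (rho 0 1)^*,
      Re (rho 0 0) + Re (rho 1 1) = 1 &
      [/\ 0 <= Re (rho 0 0), 0 <= Re (rho 1 1) &
       Re (rho 0 1) ^+ 2 + Im (rho 0 1) ^+ 2 <= Re (rho 0 0) * Re (rho 1 1)]].
Proof.
move=> [H [P T]].
have h i j : (rho j i)^* = rho i j by rewrite -{2}H /adjmx !mxE.
have i0 : Im (rho 0 0) = 0 by have := congr1 Im (h 0 0); rewrite ImJ; lra.
have i1 : Im (rho 1 1) = 0 by have := congr1 Im (h 1 1); rewrite ImJ; lra.
have e10 : rho 1 0 = (rho 0 1)^* by rewrite h.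
have tr : Re (rho 0 0) + Re (rho 1 1) = 1.
  by have := congr1 Re T; rewrite /mxtrace sum2 ReD.
have PR x y : 0 <= Re ((x^* * rho 0 0 + y^* * rho 1 0) * x + (x^* * rho 0 1 + y^* * rho 1 1) * y).
  by have := P (vec x y); rewrite quadv cge0 => /andP[].
have a0 := PR 1 0; rewrite !ReIm i0 i1 in a0.
have d0 := PR 0 1; rewrite !ReIm i0 i1 in d0.
have q1 := PR (- rho 0 1) (Re (rho 0 0))%:C; rewrite e10 !ReIm i0 i1 in q1.
have q2 := PR (Re (rho 1 1))%:C (- (rho 0 1)^*); rewrite e10 !ReIm i0 i1 in q2.
split => //; split; [lra|lra|].
move: a0 d0 q1 q2 tr.
set a := Re (rho 0 0); set d := Re (rho 1 1); set p := Re (rho 0 1); set q := Im (rho 0 1).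
move=> a0 d0 q1 q2 tr.
have -> : d = 1 - a by lra.
rewrite (_ : d = 1 - a) in q1 q2; last lra.
nra.
Qed.

Lemma ord2 (i : 'I_2) : i = 0 \/ i = 1.
Proof. case: i => [[|[|//]] Hi]; [left|right]; exact: val_inj. Qed.

Lemma state_of (M : 'M[R[i]]_2) : Im (M 0 0) = 0 -> Im (M 1 1) = 0 ->
  M 1 0 = (M 0 1)^* -> Re (M 0 0) + Re (M 1 1) = 1 ->
  (forall x y, 0 <= Re ((x^* * M 0 0 + y^* * M 1 0) * x + (x^* * M 0 1 + y^* * M 1 1) * y)) ->
  is_state M.
Proof.
move=> i0 i1 e10 tr P; split; [|split].
- apply/matrixP => i j; rewrite /adjmx !mxE.
  case: (ord2 i) => ->; case: (ord2 j) => ->.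
  + by apply: ceqP; rewrite !ReIm ?i0; lra.
  + by rewrite e10 conjcK.
  + by rewrite e10.
  + by apply: ceqP; rewrite !ReIm ?i1; lra.
- move=> v; rewrite quad cge0 P andbT; apply/eqP.
  rewrite e10 !ReIm i0 i1; ring.
- apply: ceqP; rewrite /mxtrace sum2 !ReIm ?i0 ?i1 //; lra.
Qed.

Lemma diag_state (M : 'M[R[i]]_2) : M 0 1 = 0 -> M 1 0 = 0 ->
  Im (M 0 0) = 0 -> Im (M 1 1) = 0 -> 0 <= Re (M 0 0) -> 0 <= Re (M 1 1) ->
  Re (M 0 0) + Re (M 1 1) = 1 -> incoherent M.
Proof.
move=> e01 e10 i0 i1 a0 d0 tr; split.
  apply: state_of => //; first by rewrite e10 e01 conjc0.
  move=> x y; rewrite e01 e10 !ReIm i0 i1; nra.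
apply/is_diag_mxP => i j; case: (ord2 i) => ->; case: (ord2 j) => -> //.
Qed.


Definition nrm (p q : R) := Num.sqrt (p ^+ 2 + q ^+ 2).

Definition tau (p q : R) : 'M[R[i]]_2 :=
  \matrix_(i, j) (if val i == val j then (2^-1 : R)%:C
     else if val i == 0%N then ((- p / (2 * nrm p q)) +i* (- q / (2 * nrm p q)))
     else ((- p / (2 * nrm p q)) +i* (q / (2 * nrm p q)))).

Lemma nrm_facts p q : 0 <= nrm p q /\ nrm p q ^+ 2 = p ^+ 2 + q ^+ 2.
Proof.
rewrite /nrm; split; first exact: sqrtr_ge0.
by rewrite sqr_sqrtr // addr_ge0 // sqr_ge0.
Qed.

Lemma tau_small p q : (p / (2 * nrm p q)) ^+ 2 + (q / (2 * nrm p q)) ^+ 2 <= 4^-1.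
Proof.
have [n0 n2] := nrm_facts p q.
have [->|nz] := eqVneq (nrm p q) 0.
  rewrite mulr0 invr0 !mulr0; lra.
have -> : (p / (2 * nrm p q)) ^+ 2 + (q / (2 * nrm p q)) ^+ 2 = 4^-1.
  rewrite !expr_div_n -mulrDl exprMn -n2; field.
  by rewrite nz /=.
by [].
Qed.

Lemma tau_state p q : is_state (tau p q).
Proof.
have hs := tau_small p q.
apply: state_of; rewrite ?mxE /= ?ReIm //.
- by apply: ceqP; rewrite !ReIm // mulNr opprK.
- clear hs; lra.
move=> x y; rewrite !ReIm.
rewrite !mulNr in hs *.
move: hs; set u := p / (2 * nrm p q); set w := q / (2 * nrm p q).
clearbody u w => hs.
case: x => x1 x2; case: y => y1 y2; rewrite !ReIm.
set A := x1 * y1 + x2 * y2; set B := x2 * y1 - x1 * y2.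
set X := x1 ^+ 2 + x2 ^+ 2; set Y := y1 ^+ 2 + y2 ^+ 2.
have hAB : A ^+ 2 + B ^+ 2 = X * Y by rewrite /A /B /X /Y; ring.
have X0 : 0 <= X by rewrite /X; nra.
have Y0 : 0 <= Y by rewrite /Y; nra.
have hz : (u * A + w * B) ^+ 2 <= 4^-1 * (X * Y).
  have h1 : 0 <= (u * B - w * A) ^+ 2 by apply: sqr_ge0.
  have h2 : (u * A + w * B) ^+ 2 + (u * B - w * A) ^+ 2 = (u^+2 + w^+2) * (X * Y) by rewrite -hAB; ring.
  have h3 : 0 <= X * Y by apply: mulr_ge0.
  nra.
have hz2 : 4 * (u * A + w * B) <= X + Y.
  move: hz; set z := u * A + w * B; clearbody z => hz.
  have h4 : (4 * z) ^+ 2 <= (X + Y) ^+ 2.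
    have : 0 <= (X - Y) ^+ 2 by apply: sqr_ge0.
    nra.
  have [zn|zp] := lerP z 0; first lra.
  nra.
have hq : 0 <= (X + Y) / 2 - 2 * (u * A + w * B) by lra.
apply: (le_trans hq); rewrite le_eqVlt; apply/orP; left; apply/eqP.
rewrite /X /Y /A /B; ring.
Qed.



Lemma sup_eq (E : set R) (x : R) : E x -> (forall y : R, E y -> y <= x) -> sup E = x.
Proof.
move=> Ex ub; apply/le_anti/andP; split.
  by apply: ge_sup; [exists x|].
by apply: ub_le_sup => //; exists x.
Qed.

Lemma inf_eq (E : set R) (x : R) : E x -> (forall y : R, E y -> x <= y) -> inf E = x.
Proof.
move=> Ex lb; apply/le_anti/andP; split.
  by apply: ge_inf => //; exists x.
by apply: lb_le_inf; [exists x|].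
Qed.

Lemma invC (s : R) : (1 + s%:C)^-1 = ((1 + s)^-1)%:C.
Proof. by rewrite -(rmorph1 (real_complex R)) -rmorphD fmorphV. Qed.

Lemma nrm_mul p q : p = 2 * nrm p q * (p / (2 * nrm p q)) /\ q = 2 * nrm p q * (q / (2 * nrm p q)).
Proof.
have [n0 n2] := nrm_facts p q.
have [e|nz] := eqVneq (nrm p q) 0.
  rewrite e in n2; rewrite e mulr0 !mul0r.
  split; nra.
split; field; by rewrite nz.
Qed.

Lemma angle (x y : R) : x ^+ 2 + y ^+ 2 = 1 ->
  exists t, [/\ 0 <= t <= 2 * pi, cos t = x & sin t = y].
Proof.
move=> h.
have hx : -1 <= x <= 1 by apply/andP; split; nra.
have hc : cos (acos x) = x by apply: acosK; rewrite in_itv.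
have hs : sin (acos x) = `|y|.
  by rewrite sin_acos // (_ : 1 - x ^+ 2 = y ^+ 2) ?sqrtr_sqr //; lra.
have a0 := acos_ge0 hx; have a1 := acos_lepi hx; have p0 := pi_ge0 R.
have [y0|y0] := lerP 0 y.
  exists (acos x); split => //; last by rewrite hs ger0_norm.
  apply/andP; split => //; lra.
exists (2 * pi - acos x); split.
- apply/andP; split; lra.
- by rewrite cosB mulr_natl cos2pi sin2pi hc; ring.
- rewrite sinB mulr_natl cos2pi sin2pi hs ltr0_norm //; ring.
Qed.


Lemma braket_eq (rho : 'M[R[i]]_2) t0 t1 :
  Im (rho 0 0) = 0 -> Im (rho 1 1) = 0 -> rho 1 0 = (rho 0 1)^* ->
  Re (braket rho (maxcoh t0 t1)) =
  (Num.sqrt 2)^-1 ^+ 2 * (Re (rho 0 0) * (cos t0 ^+ 2 + sin t0 ^+ 2) +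
     Re (rho 1 1) * (cos t1 ^+ 2 + sin t1 ^+ 2) +
     2 * (Re (rho 0 1) * (cos t0 * cos t1 + sin t0 * sin t1)
          - Im (rho 0 1) * (cos t0 * sin t1 - sin t0 * cos t1))).
Proof.
move=> i0 i1 e10.
rewrite /braket quad !mxE /= e10 /expi !ReIm i0 i1; ring.
Qed.

End Tool.

Theorem mainTheorem2 (R : realType) (rho : 'M[R[i]]_2) :
  is_state rho ->
  coh_fraction rho = 2^-1 + 2^-1 * robustness rho.
Proof.
move=> st; have [i0 i1 e10 tr [a0 d0 hc]] := state_facts st.
have [n0 n2] := nrm_facts (complex.Re (rho 0 1)) (complex.Im (rho 0 1)).
have [mp mq] := nrm_mul (complex.Re (rho 0 1)) (complex.Im (rho 0 1)).
have ts := tau_state (complex.Re (rho 0 1)) (complex.Im (rho 0 1)).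
move: i0 i1 e10 tr a0 d0 hc n0 n2 mp mq ts.
set a := complex.Re (rho 0 0); set d := complex.Re (rho 1 1).
set p := complex.Re (rho 0 1); set q := complex.Im (rho 0 1).
set n := nrm p q.
move=> i0 i1 e10 tr a0 d0 hc n0 n2 mp mq ts.
have k2 : (Num.sqrt 2)^-1 ^+ 2 = 2^-1 :> R by rewrite exprVn sqr_sqrtr // ler0n.
have F : coh_fraction rho = 2^-1 + n.
  rewrite /coh_fraction; apply: sup_eq.
  - have [t1 [ht1 c1]] : exists t1, 0 <= t1 <= 2 * pi /\ p * cos t1 - q * sin t1 = n.
      have [e|nz] := eqVneq n 0.
        exists 0; split; first by rewrite lexx /= mulr_ge0 ?pi_ge0.
        rewrite e in n2; rewrite e cos0 sin0; nra.
      have npos : 0 < n by rewrite lt_neqAle eq_sym nz n0.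
      have [t [ht ct st']] := angle (x := p / n) (y := - q / n) ltac:(rewrite !expr_div_n sqrrN -mulrDl -n2 divff // expf_neq0 //).
      exists t; split => //; rewrite ct st'.
      have -> : p * (p / n) - q * (- q / n) = (p ^+ 2 + q ^+ 2) / n by field.
      by rewrite -n2 expr2 mulfK.
    exists 0, t1; split => //; first by rewrite lexx /= mulr_ge0 ?pi_ge0.
    rewrite braket_eq // k2 cos0 sin0 !cos2Dsin2.
    rewrite -/a -/d -/p -/q -c1 (_ : d = 1 - a); last lra.
    by field.
  - move=> y [t0 [t1 [h0 h1 ->]]]; rewrite braket_eq // k2 !cos2Dsin2.
    rewrite -/a -/d -/p -/q.
    set U1 := cos t0 * cos t1 + sin t0 * sin t1.
    set U2 := cos t0 * sin t1 - sin t0 * cos t1.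
    have hU : U1 ^+ 2 + U2 ^+ 2 = 1.
      rewrite (_ : U1 ^+ 2 + U2 ^+ 2 = (cos t0 ^+ 2 + sin t0 ^+ 2) * (cos t1 ^+ 2 + sin t1 ^+ 2)).
        by rewrite !cos2Dsin2 mulr1.
      rewrite /U1 /U2; ring.
    have hz : (p * U1 - q * U2) ^+ 2 <= n ^+ 2.
      have hh1 : 0 <= (p * U2 + q * U1) ^+ 2 by apply: sqr_ge0.
      have hh2 : (p * U1 - q * U2) ^+ 2 + (p * U2 + q * U1) ^+ 2 = (p ^+ 2 + q ^+ 2) * (U1 ^+ 2 + U2 ^+ 2) by ring.
      rewrite hU mulr1 -n2 in hh2; lra.
    have hz2 : p * U1 - q * U2 <= n.
      move: hz; set z := p * U1 - q * U2; clearbody z => hz.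
      have [zn|zp] := lerP z 0; first lra.
      nra.
    rewrite (_ : d = 1 - a); last lra.
    lra.
have Rb : robustness rho = 2 * n.
  rewrite /robustness; apply: inf_eq.
  - split; first lra.
    exists (tau p q); split => //.
    have cpos : 0 < (1 + 2 * n)^-1 by rewrite invr_gt0; lra.
    have cnz : 1 + 2 * n != 0 by rewrite gt_eqF //; lra.
    apply: diag_state; rewrite !mxE /= invC -/n.
    + apply: ceqP; rewrite !ReIm -/p -/q -/n !mulNr.
        move: (p / (2 * n)) mp => u ->; ring.
      move: (q / (2 * n)) mq => u ->; ring.
    + apply: ceqP; rewrite e10 !ReIm -/p -/q -/n !mulNr.
        move: (p / (2 * n)) mp => u ->; ring.
      move: (q / (2 * n)) mq => u ->; ring.
    + rewrite !ReIm i0; ring.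
    + rewrite !ReIm i1; ring.
    + rewrite !ReIm -/a; nra.
    + rewrite !ReIm -/d; nra.
    + rewrite !ReIm -/a -/d (_ : d = 1 - a); last lra.
      by field.
  - move=> s [s0 [tau' [ts' [_ /is_diag_mxP D]]]].
    have := D 0 1 isT; rewrite !mxE invC => h.
    have c0 : (1 + s)^-1 != 0 by rewrite invr_eq0 gt_eqF //; lra.
    have hr := congr1 (@complex.Re R) h; have hi := congr1 (@complex.Im R) h.
    rewrite !ReIm !mul0r !subr0 !addr0 -/p -/q in hr hi.
    move/eqP: hr; rewrite mulf_eq0 (negbTE c0) /= => /eqP hr.
    move/eqP: hi; rewrite mulf_eq0 (negbTE c0) /= => /eqP hi.
    have [_ _ _ tra [ta0 td0 thc]] := state_facts ts'.
    move: tra ta0 td0 thc hr hi.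
    set ta := complex.Re (tau' 0 0); set td := complex.Re (tau' 1 1).
    set tp := complex.Re (tau' 0 1); set tq := complex.Im (tau' 0 1).
    move=> tra ta0 td0 thc hr hi.
    have h4 : tp ^+ 2 + tq ^+ 2 <= 4^-1.
      have : 0 <= (ta - td) ^+ 2 by apply: sqr_ge0.
      nra.
    have h5 : n ^+ 2 <= s ^+ 2 * 4^-1.
      rewrite n2 (_ : p = - (s * tp)); last lra.
      rewrite (_ : q = - (s * tq)); last lra.
      have : 0 <= s ^+ 2 by apply: sqr_ge0.
      nra.
    have [sn|sp] := lerP (2 * n) s => //.
    nra.
rewrite F Rb; lra.
Qed.
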